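(* Let $l^\top\ge 1$ be an integer, $\varepsilon>0$, $\theta\in\mathbb{R}$, and $\beta=|\mathcal{I}|+1$. Consider datasets in which every sequence has length at most $l^\top$. Then the modified PrivTree for PSTs (described below) with $\lambda\ge\frac{2\beta-1}{\beta-1}\cdot\frac{l^\top}{\varepsilon}$ and $\delta=\lambda\ln\beta$ satisfies $\varepsilon$-differential privacy, where two datasets are neighboring if one is obtained from the other by inserting a single sequence of length at most $l^\top$.
   Context: $\mathrm{Lap}(\lambda)$ is the Laplace distribution with density $\frac{1}{2\lambda}e^{-|y|/\lambda}$. $\mathcal{I}$ is a finite alphabet and $\$,\&$ are special symbols not in $\mathcal{I}$. A sequence is a string $s=\$x_1\cdots x_l$ with each $x_i\in\mathcal{I}\cup\{\&\}$, where $\&$ may occur only as the last symbol; its length is $l$. A dataset is a finite multiset of sequences. A PST node is a string $w$ over $\mathcal{I}\cup\{\$\}$ in which $\$$ can occur only as the first symbol; the root is the empty string; if $w$ does not start with $\$$ its children are $yw$ for $y\in\mathcal{I}\cup\{\$\}$; $\mathrm{depth}(w)$ is the length of $w$. For $x\in\mathcal{I}\cup\{\&\}$, $\mathrm{hist}(w)[x]$ is the total over sequences $\$x_1\cdots x_l$ in $D$ of the number of positions $i\in[1,l]$ with $x_i=x$ such that $w$ is a suffix of $\$x_1\cdots x_{i-1}$. The score is $c(w)=\sum_{x}\mathrm{hist}(w)[x]-\max_{x}\mathrm{hist}(w)[x]$ (over $x\in\mathcal{I}\cup\{\&\}$). Modified PrivTree$(D,\lambda,\theta,\delta)$: start with the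 tree containing only the root, unvisited. While some node $w$ is unvisited: mark it visited; if $w$ starts with $\$$, it is not split; otherwise set $b(w)=\max\{\theta-\delta,\ c(w)-\mathrm{depth}(w)\delta\}$, $\hat b(w)=b(w)+\eta_w$ with $\eta_w\sim\mathrm{Lap}(\lambda)$ fresh and independent, and if $\hat b(w)>\theta$ add all $|\mathcal{I}|+1$ children of $w$ as unvisited nodes. Output: the tree of nodes (strings) only, with all scores and histograms removed. An algorithm $\mathcal{A}$ is $\varepsilon$-differentially private if for all neighboring $D,D'$ and all outputs $O$, $\ln\big(\Pr[\mathcal{A}(D)=O]/\Pr[\mathcal{A}(D')=O]\big)\le\varepsilon$. *)

(* Defs.v *)
From Stdlib Require Import Reals List Permutation ClassicalEpsilon Bool.
Import ListNotations.
Open Scope R_scope.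

Section PST.
Variable I : Type.
Variable eqI : forall a b : I, {a = b} + {a <> b}.
Variable enumI : list I.

Definition alphabet_ok : Prop := NoDup enumI /\ forall a : I, In a enumI.

Definition beta : nat := S (length enumI).

(* A sequence  $ x_1 ... x_l : body = the symbols of I, term = true iff the
   sequence ends with the terminal symbol & (which may only occur last). *)
Record sequence := mkSeq { body : list I; term : bool }.

Definition seq_length (s : sequence) : nat :=
  (length (body s) + (if term s then 1 else 0))%nat.

(* A dataset is a finite multiset of sequences, represented by a list. *)
Definition dataset := list sequence.

(* A PST node: the string  nstr  (left to right), preceded by $ iff ndollar. *)
Record node := mkNode { nstr : list I; ndollar : bool }.

Definition node_eq_dec : forall v w : node, {v = w} + {v <> w}.
Proof.
  decide equality; [ apply Bool.bool_dec | apply (list_eq_dec eqI) ].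
Defined.

Definition root : node := mkNode [] false.

Definition depth (w : node) : nat :=
  (length (nstr w) + (if ndollar w then 1 else 0))%nat.

(* children yw, y in I ∪ {$}, of a node w not starting with $ *)
Definition children (w : node) : list node :=
  map (fun a => mkNode (a :: nstr w) false) enumI ++ [mkNode (nstr w) true].

Definition parent (w : node) : option node :=
  if ndollar w then Some (mkNode (nstr w) false)
  else match nstr w with [] => None | _ :: u => Some (mkNode u false) end.

(* Symbols x in I ∪ {&}: Some a for a in I, None for &. *)
Definition sym_eqb (x y : option I) : bool :=
  match x, y with
  | Some a, Some b => if eqI a b then true else false
  | None, None => true
  | _, _ => false
  end.

Definition symbols : list (option I) := None :: map Some enumI.

Definition suffixb (u p : list I) : bool :=
  (Nat.leb (length u) (length p) && 
  (if list_eq_dec eqI u (skipn (length p - length u) p) then true else false))%bool.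

(* is w a suffix of the string  $ p ? *)
Definition ctx_match (w : node) (p : list I) : bool :=
  if ndollar w then (if list_eq_dec eqI (nstr w) p then true else false)
  else suffixb (nstr w) p.

(* positions i in [1,l] of a sequence, as pairs (x_i, x_1 ... x_{i-1}) *)
Fixpoint pos_aux (pre : list I) (b : list I) : list (option I * list I) :=
  match b with
  | [] => []
  | a :: b' => (Some a, pre) :: pos_aux (pre ++ [a]) b'
  end.

Definition positions (s : sequence) : list (option I * list I) :=
  pos_aux [] (body s) ++ (if term s then [(None, body s)] else []).

Definition hist (D : dataset) (w : node) (x : option I) : nat :=
  fold_right Nat.add 0%nat
    (map (fun s => length (filter (fun pr => (sym_eqb (fst pr) x && ctx_match w (snd pr))%bool)
                                  (positions s))) D).

Definition score (D : dataset) (w : node) : nat :=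
  (fold_right Nat.add 0%nat (map (hist D w) symbols)
   - fold_right Nat.max 0%nat (map (hist D w) symbols))%nat.

(* Pr[ eta > t ] for eta ~ Lap(lam), lam > 0 *)
Definition lap_gt (lam t : R) : R :=
  if Rlt_dec t 0 then 1 - / 2 * exp (t / lam) else / 2 * exp (- t / lam).

Definition bval (D : dataset) (theta delta : R) (w : node) : R :=
  Rmax (theta - delta) (INR (score D w) - INR (depth w) * delta).

(* probability that w is split: Pr[ b(w) + eta_w > theta ] *)
Definition p_split (D : dataset) (lam theta delta : R) (w : node) : R :=
  lap_gt lam (theta - bval D theta delta w).

(* A finite set of nodes (given by a duplicate-free list) that is a possible
   output tree of the algorithm. *)
Definition valid_tree (O : list node) : Prop :=
  NoDup O /\ In root O /\
  (forall w p, In w O -> parent w = Some p -> In p O) /\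
  (forall w, In w O -> ndollar w = false ->
     (forall c, In c (children w) -> In c O) \/
     (forall c, In c (children w) -> ~ In c O)).

(* contribution of the (independent) noisy split decision taken at node w *)
Definition node_factor (D : dataset) (lam theta delta : R) (O : list node)
  (w : node) : R :=
  if ndollar w then 1
  else if in_dec node_eq_dec (mkNode (nstr w) true) O
       then p_split D lam theta delta w
       else 1 - p_split D lam theta delta w.

(* Pr[ PrivTree(D, lam, theta, delta) = O ] *)
Definition privtree_prob (D : dataset) (lam theta delta : R) (O : list node) : R :=
  if excluded_middle_informative (valid_tree O)
  then fold_right Rmult 1 (map (node_factor D lam theta delta O) O)
  else 0.

Definition neighboring (ltop : nat) (D D' : dataset) : Prop :=
  (exists s, (seq_length s <= ltop)%nat /\ Permutation D' (s :: D)) \/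
  (exists s, (seq_length s <= ltop)%nat /\ Permutation D (s :: D')).

Definition bounded_dataset (ltop : nat) (D : dataset) : Prop :=
  forall s, In s D -> (seq_length s <= ltop)%nat.

End PST.

Arguments mkSeq {I}.
Arguments mkNode {I}.

(* Main.v *)
Require Import Defs.
From Stdlib Require Import Reals List Permutation.
Open Scope R_scope.
From Coquelicot Require Import Coquelicot.
From Stdlib Require Import Lra Lia Bool ClassicalEpsilon.
Import ListNotations.
Open Scope R_scope.

Lemma exp_comb a b c : a + b = c -> exp a * exp b = exp c.
Proof. intros <-. now rewrite exp_plus. Qed.

Section RealPart.
Variables lam theta delta : R.
Hypothesis Hlam : 0 < lam.
Hypothesis Hdel : 0 < delta.

Definition ff x := lap_gt lam (theta - x).
Definition HH t := if Rle_dec t theta then t / lam else theta / lam + 1 - exp (-(t - theta) / lam).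

Lemma ff_low x : x <= theta -> ff x = /2 * exp ((x - theta)/lam).
Proof.
  intros H; unfold ff, lap_gt. destruct (Rlt_dec (theta - x) 0); [lra|].
  f_equal; f_equal; field; lra.
Qed.
Lemma ff_high x : theta < x -> ff x = 1 - /2 * exp ((theta - x)/lam).
Proof.
  intros H; unfold ff, lap_gt. destruct (Rlt_dec (theta - x) 0); [|lra]. reflexivity.
Qed.

Lemma exp_le1 t : t <= 0 -> exp t <= 1.
Proof. intros H. rewrite <- exp_0. destruct (Req_dec t 0); [subst; lra|]. left; apply exp_increasing; lra. Qed.

Lemma div_le0 a : a <= 0 -> a / lam <= 0.
Proof. intros H. unfold Rdiv. assert (0 < / lam) by (apply Rinv_0_lt_compat; lra). nra. Qed.
Lemma div_mono a b : a <= b -> a / lam <= b / lam.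
Proof. intros H. unfold Rdiv. assert (0 < / lam) by (apply Rinv_0_lt_compat; lra). nra. Qed.

Lemma ff_bounds x : 0 < ff x < 1.
Proof.
  destruct (Rle_dec x theta) as [h|h].
  - rewrite ff_low by lra. pose proof (exp_pos ((x - theta)/lam)).
    pose proof (exp_le1 ((x-theta)/lam) (div_le0 (x-theta) ltac:(lra))). lra.
  - rewrite ff_high by lra. pose proof (exp_pos ((theta - x)/lam)).
    pose proof (exp_le1 ((theta - x)/lam) (div_le0 (theta - x) ltac:(lra))). lra.
Qed.

Lemma exp_mono a b : a <= b -> exp a <= exp b.
Proof. intros H. destruct (Req_dec a b); [subst; lra|]. left; apply exp_increasing; lra. Qed.

Lemma ff_mono x y : x <= y -> ff x <= ff y.
Proof.
  intros Hxy. destruct (Rle_dec y theta) as [hy|hy].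
  - rewrite !ff_low by lra. pose proof (exp_mono _ _ (div_mono (x - theta) (y - theta) ltac:(lra))). lra.
  - rewrite (ff_high y) by lra. destruct (Rle_dec x theta) as [hx|hx].
    + rewrite ff_low by lra. pose proof (exp_le1 ((x-theta)/lam) (div_le0 (x-theta) ltac:(lra))).
      pose proof (exp_le1 ((theta - y)/lam) (div_le0 (theta - y) ltac:(lra))). lra.
    + rewrite ff_high by lra. pose proof (exp_mono _ _ (div_mono (theta - y) (theta - x) ltac:(lra))). lra.
Qed.

Lemma HH_high t : theta <= t -> HH t = theta / lam + 1 - exp ((theta - t)/lam).
Proof.
  intros H. unfold HH. destruct (Rle_dec t theta).
  - assert (t = theta) by lra. subst. replace ((theta - theta)/lam) with 0 by (field; lra).
    rewrite exp_0; lra.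
  - f_equal. f_equal. field; lra.
Qed.

Lemma HH_mono x y : x <= y -> HH x <= HH y.
Proof.
  intros Hxy. destruct (Rle_dec y theta) as [hy|hy].
  - unfold HH. destruct (Rle_dec x theta); destruct (Rle_dec y theta); try lra. apply div_mono; lra.
  - rewrite (HH_high y) by lra. destruct (Rle_dec x theta) as [hx|hx].
    + unfold HH at 1. destruct (Rle_dec x theta); [|lra].
      pose proof (div_mono x theta hx). pose proof (exp_le1 ((theta - y)/lam) (div_le0 (theta - y) ltac:(lra))). lra.
    + rewrite HH_high by lra. pose proof (exp_mono _ _ (div_mono (theta - y) (theta - x) ltac:(lra))). lra.
Qed.

Lemma ff_ratio x y : x <= y -> ff y <= exp (HH y - HH x) * ff x.
Proof.
  intros Hxy. destruct (Rle_dec y theta) as [hy|hy].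
  - rewrite !ff_low by lra. unfold HH. destruct (Rle_dec y theta); [|lra]. destruct (Rle_dec x theta); [|lra].
    rewrite <- Rmult_assoc, (Rmult_comm _ (/2)), Rmult_assoc. rewrite (exp_comb _ _ ((y - theta)/lam)). lra. field; lra.
  - rewrite (ff_high y) by lra. rewrite (HH_high y) by lra.
    set (z := exp ((theta - y)/lam)).
    assert (Hz : 0 < z <= 1) by (split; [apply exp_pos| apply exp_le1, div_le0; lra]).
    destruct (Rle_dec x theta) as [hx|hx].
    + rewrite ff_low by lra. unfold HH. destruct (Rle_dec x theta); [|lra].
      replace (exp (theta / lam + 1 - z - x / lam) * (/ 2 * exp ((x - theta) / lam)))
        with (/2 * (exp (theta / lam + 1 - z - x / lam) * exp ((x - theta) / lam))) by ring.
      rewrite (exp_comb _ _ (1 - z)) by (field; lra).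
      pose proof (exp_ineq1_le (1 - z)). lra.
    + rewrite ff_high by lra. rewrite (HH_high x) by lra.
      set (w := exp ((theta - x)/lam)).
      assert (Hw : z <= w <= 1) by (split; [apply exp_mono, div_mono; lra| apply exp_le1, div_le0; lra]).
      replace (theta / lam + 1 - z - (theta / lam + 1 - w)) with (w - z) by ring.
      pose proof (exp_ineq1_le (w - z)). nra.
Qed.

Lemma ff_ratio2 x y : x <= y -> 1 - ff x <= exp ((y - x)/lam) * (1 - ff y).
Proof.
  intros Hxy. destruct (Rle_dec y theta) as [hy|hy].
  - rewrite !ff_low by lra.
    set (w := exp ((x - theta)/lam)). set (v := exp ((y - theta)/lam)).
    assert (Hw : 0 < w <= v) by (split; [apply exp_pos| apply exp_mono, div_mono; lra]).
    assert (Hv : v <= 1) by (apply exp_le1, div_le0; lra).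
    assert (E : exp ((y - x)/lam) * w = v) by (apply exp_comb; field; lra).
    assert (E' : exp ((y - x)/lam) = v / w) by (rewrite <- E; field; lra).
    rewrite E'. apply (Rmult_le_reg_r w); [lra|].
    replace (v / w * (1 - / 2 * v) * w) with (v * (1 - /2 * v)) by (field; lra). nra.
  - rewrite (ff_high y) by lra. destruct (Rle_dec x theta) as [hx|hx].
    + rewrite ff_low by lra.
      set (w := exp ((x - theta)/lam)).
      assert (Hw : 0 < w <= 1) by (split; [apply exp_pos| apply exp_le1, div_le0; lra]).
      assert (E : exp ((y - x)/lam) * exp ((theta - y)/lam) * w = 1).
      { rewrite (exp_comb _ _ ((theta - x)/lam)) by (field; lra). unfold w.
        rewrite (exp_comb _ _ 0) by (field; lra). apply exp_0. }
      replace (exp ((y - x) / lam) * (1 - (1 - / 2 * exp ((theta - y) / lam))))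
        with (/2 * (exp ((y - x)/lam) * exp ((theta - y)/lam))) by ring.
      set (P := exp ((y - x)/lam) * exp ((theta - y)/lam)) in *.
      assert (P = / w) by (apply (Rmult_eq_reg_r w); [rewrite E; field|]; lra).
      rewrite H. apply (Rmult_le_reg_r w); [lra|]. replace (/ 2 * / w * w) with (/2) by (field; lra). nra.
    + rewrite ff_high by lra.
      replace (exp ((y - x) / lam) * (1 - (1 - / 2 * exp ((theta - y) / lam))))
        with (/2 * (exp ((y - x)/lam) * exp ((theta - y)/lam))) by ring.
      rewrite (exp_comb _ _ ((theta - x)/lam)) by (field; lra). lra.
Qed.


Definition a0 := theta - delta.
Definition Hh t := HH (Rmax a0 t).
Definition Gam u := Hh (u + 1) - Hh u.
Definition gt t := if Rle_dec a0 t then (if Rle_dec t theta then / lam else exp ((theta - t)/lam) / lam) else 0.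

Lemma Gam_nonneg u : 0 <= Gam u.
Proof. unfold Gam, Hh. assert (HH (Rmax a0 u) <= HH (Rmax a0 (u+1))); [|lra].
  apply HH_mono. unfold Rmax; repeat destruct Rle_dec; lra. Qed.

Lemma scalR (a b : R) : scal a b = a * b.
Proof. reflexivity. Qed.
Lemma plusR (a b : R) : plus a b = a + b.
Proof. reflexivity. Qed.
Lemma oppR (a : R) : opp a = - a.
Proof. reflexivity. Qed.
Lemma minusR (a b : R) : minus a b = a - b.
Proof. reflexivity. Qed.

Lemma R1 x y : x <= a0 -> y <= a0 -> is_RInt gt x y (Hh y - Hh x).
Proof.
  intros hx hy. assert (E : Hh y - Hh x = scal (y - x) 0).
  { rewrite scalR. unfold Hh. rewrite !Rmax_left by lra. ring. }
  rewrite E. apply (is_RInt_ext (fun _ => 0)). 2: apply (is_RInt_const (V := R_NormedModule)).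
  intros t [h1 h2]. unfold gt. destruct (Rle_dec a0 t); [|reflexivity].
  exfalso. unfold Rmax in h2; destruct Rle_dec in h2; lra.
Qed.

Lemma R2 x y : a0 <= x <= theta -> a0 <= y <= theta -> is_RInt gt x y (Hh y - Hh x).
Proof.
  intros hx hy. assert (E : Hh y - Hh x = scal (y - x) (/lam)).
  { rewrite scalR. unfold Hh. rewrite !Rmax_right by lra. unfold HH.
    destruct (Rle_dec y theta); destruct (Rle_dec x theta); try lra. }
  rewrite E. apply (is_RInt_ext (fun _ => /lam)). 2: apply (is_RInt_const (V := R_NormedModule)).
  intros t [h1 h2]. unfold gt.
  assert (Rmin x y <= t <= Rmax x y) by lra.
  unfold Rmin, Rmax in *. destruct (Rle_dec a0 t); destruct (Rle_dec t theta); try reflexivity;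
   destruct (Rle_dec x y); lra.
Qed.

Lemma R3 x y : theta <= x -> theta <= y -> is_RInt gt x y (Hh y - Hh x).
Proof.
  intros hx hy.
  set (F := fun t => theta / lam + 1 - exp ((theta - t)/lam)).
  set (dF := fun t => exp ((theta - t)/lam) / lam).
  assert (E : Hh y - Hh x = minus (F y) (F x)).
  { transitivity (F y - F x); [|reflexivity]. unfold Hh. rewrite !Rmax_right by (unfold a0; lra). rewrite !HH_high by lra. reflexivity. }
  rewrite E. apply (is_RInt_ext dF).
  - intros t [h1 h2]. unfold gt, dF. assert (theta < t) by (unfold Rmin in h1; destruct Rle_dec in h1; lra).
    destruct (Rle_dec a0 t); [|unfold a0 in *; lra]. destruct (Rle_dec t theta); [lra|reflexivity].
  - apply (is_RInt_derive (V := R_CompleteNormedModule) F dF).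
    + intros t _. unfold F, dF. auto_derive; [exact I|]. unfold Rminus, Rdiv; ring.
    + intros t _. apply (ex_derive_continuous (K := R_AbsRing) (V := R_NormedModule)). unfold dF. auto_derive. lra.
Qed.

Lemma to_a x : is_RInt gt x a0 (Hh a0 - Hh x).
Proof.
  destruct (Rle_dec x a0) as [h|h]. { apply R1; lra. }
  destruct (Rle_dec x theta) as [h'|h']. { apply R2; unfold a0 in *; lra. }
  assert (E : @eq R (plus (Hh theta - Hh x) (Hh a0 - Hh theta)) (Hh a0 - Hh x)).
  { rewrite plusR. ring. }
  rewrite <- E.
  apply (is_RInt_Chasles (V:=R_NormedModule)) with theta.
  - apply R3; lra.
  - apply R2; unfold a0 in *; lra.
Qed.

Lemma int_all x y : is_RInt gt x y (Hh y - Hh x).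
Proof.
  assert (E : @eq R (plus (Hh a0 - Hh x) (opp (Hh a0 - Hh y))) (Hh y - Hh x)).
  { rewrite plusR, oppR. ring. }
  rewrite <- E.
  apply (is_RInt_Chasles (V:=R_NormedModule)) with a0. apply to_a. apply (is_RInt_swap (V:=R_NormedModule)). apply to_a.
Qed.


Lemma int_Gam u : is_RInt (fun s => gt (u + s)) 0 1 (Gam u).
Proof.
  pose proof (int_all (1 * 0 + u) (1 * 1 + u)) as H.
  apply (is_RInt_comp_lin (V:=R_NormedModule)) in H.
  replace (Gam u) with (Hh (1 * 1 + u) - Hh (1 * 0 + u)) by (unfold Gam; f_equal; f_equal; ring).
  eapply is_RInt_ext; [|exact H]. intros t _. simpl. change (scal 1 (gt (1 * t + u))) with (1 * gt (1 * t + u)). rewrite Rmult_1_l. f_equal. ring.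
Qed.

Lemma int_sum (U : nat -> R) n :
  is_RInt (fun s => sum_f_R0 (fun d => gt (U d + s)) n) 0 1 (sum_f_R0 (fun d => Gam (U d)) n).
Proof.
  induction n as [|n IH].
  - simpl. apply int_Gam.
  - simpl. eapply is_RInt_ext; [|apply (is_RInt_plus (V:=R_NormedModule) _ _ _ _ _ _ IH (int_Gam (U (S n))))].
    intros t _. reflexivity.
Qed.

Lemma gt_anti x y : a0 <= x -> x <= y -> gt y <= gt x.
Proof.
  intros h1 h2. unfold gt. destruct (Rle_dec a0 x); [|lra]. destruct (Rle_dec a0 y); [|lra].
  assert (0 < /lam) by (apply Rinv_0_lt_compat; lra).
  destruct (Rle_dec y theta); destruct (Rle_dec x theta); try lra.
  - pose proof (exp_le1 ((theta - y)/lam) (div_le0 (theta - y) ltac:(lra))).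
    unfold Rdiv at 2. nra.
  - apply Rmult_le_compat_r; [lra|]. apply exp_mono, div_mono; lra.
Qed.

Lemma gt_nonneg x : 0 <= gt x.
Proof.
  unfold gt. assert (0 < /lam) by (apply Rinv_0_lt_compat; lra).
  destruct Rle_dec; [destruct Rle_dec|]; try lra. unfold Rdiv. pose proof (exp_pos ((theta - x)/lam)). nra.
Qed.

Definition Sp (U : nat -> R) n := forall d d', (d <= d')%nat -> (d' <= n)%nat -> U d' + (INR d' - INR d) * delta <= U d.

Lemma L1 n : forall U, Sp U n -> a0 <= U n ->
  sum_f_R0 (fun d => gt (U d)) n <= sum_f_R0 (fun k => gt (a0 + INR k * delta)) n.
Proof.
  induction n as [|n IH]; intros U HS Ha.
  - simpl. apply gt_anti; lra.
  - rewrite decomp_sum by lia. simpl Init.Nat.pred.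
    change (sum_f_R0 (fun k => gt (a0 + INR k * delta)) (S n)) with
      (sum_f_R0 (fun k => gt (a0 + INR k * delta)) n + gt (a0 + INR (S n) * delta)).
    assert (H1 : sum_f_R0 (fun i => gt (U (S i))) n <= sum_f_R0 (fun k => gt (a0 + INR k * delta)) n).
    { apply (IH (fun i => U (S i))).
      - intros d d' h1 h2. pose proof (HS (S d) (S d') ltac:(lia) ltac:(lia)). rewrite !S_INR in H. lra.
      - exact Ha. }
    assert (H2 : gt (U 0%nat) <= gt (a0 + INR (S n) * delta)).
    { pose proof (HS 0%nat (S n) ltac:(lia) ltac:(lia)). simpl INR in H at 2.
      pose proof (pos_INR (S n)). apply gt_anti; nra. }
    lra.
Qed.

Variable bt : R.
Hypothesis Hbt : 1 < bt.
Hypothesis Hdelta : delta = lam * ln bt.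

Definition Ctot := / lam + (bt / (bt - 1)) / lam.

Lemma gt_lattice j : gt (a0 + INR (S j) * delta) = (/ bt) ^ j / lam.
Proof.
  unfold gt, a0. rewrite S_INR. pose proof (pos_INR j).
  destruct (Rle_dec (theta - delta) (theta - delta + (INR j + 1) * delta)); [|nra].
  assert (E : exp ((theta - (theta - delta + (INR j + 1) * delta)) / lam) = (/ bt) ^ j).
  { replace ((theta - (theta - delta + (INR j + 1) * delta)) / lam) with (- (INR j * ln bt))
      by (rewrite Hdelta; field; lra).
    rewrite exp_Ropp. change (exp (INR j * ln bt)) with (Rpower bt (INR j)).
    rewrite Rpower_pow by lra. rewrite pow_inv. reflexivity. }
  destruct (Rle_dec (theta - delta + (INR j + 1) * delta) theta).
  - assert (j = 0%nat). { destruct j; [reflexivity|]. rewrite S_INR in r0. pose proof (pos_INR j). assert (0 <= INR j * delta) by (apply Rmult_le_pos; lra). nra. }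
    subst. simpl. unfold Rdiv; ring.
  - rewrite E. reflexivity.
Qed.

Lemma L3 n : sum_f_R0 (fun k => gt (a0 + INR k * delta)) n <= Ctot.
Proof.
  unfold Ctot. assert (Hl : 0 < / lam) by (apply Rinv_0_lt_compat; lra).
  assert (Hb : 0 < bt / (bt - 1)) by (apply Rdiv_lt_0_compat; lra).
  destruct n as [|m].
  - simpl. replace (a0 + 0 * delta) with a0 by ring. unfold gt, a0.
    destruct Rle_dec; [|lra]. destruct Rle_dec; [|lra]. unfold Rdiv. nra.
  - rewrite decomp_sum by lia. simpl Init.Nat.pred.
    replace (a0 + INR 0 * delta) with a0 by (simpl; ring).
    rewrite (sum_eq _ (fun j => (/ bt) ^ j * / lam)) by (intros; rewrite gt_lattice; reflexivity).
    rewrite <- scal_sum. rewrite tech3 by (intro h; assert (bt = 1) by (rewrite <- (Rinv_inv bt), h; apply Rinv_1); lra).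
    assert (gt a0 = / lam). { unfold gt, a0. destruct Rle_dec; [|lra]. destruct Rle_dec; [reflexivity|lra]. }
    rewrite H.
    assert (Hi : 0 < / bt < 1) by (split; [apply Rinv_0_lt_compat; lra| rewrite <- Rinv_1; apply Rinv_lt_contravar; lra]).
    assert (0 < (/ bt) ^ S m) by (apply pow_lt; lra).
    assert (E : bt / (bt - 1) = / (1 - / bt)) by (field; lra).
    rewrite E. unfold Rdiv. apply Rplus_le_compat_l.
    assert (0 < / (1 - / bt)) by (apply Rinv_0_lt_compat; lra).
    assert (0 < / lam * / (1 - / bt)) by (apply Rmult_lt_0_compat; lra). nra.
Qed.

Lemma L2 n : forall U, Sp U n -> sum_f_R0 (fun d => gt (U d)) n <= Ctot.
Proof.
  induction n as [|n IH]; intros U HS.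
  - destruct (Rle_dec a0 (U 0%nat)).
    + eapply Rle_trans; [apply (L1 0 U HS r)|apply L3].
    + simpl. unfold gt at 1. destruct Rle_dec; [lra|]. unfold Ctot.
      assert (0 < / lam) by (apply Rinv_0_lt_compat; lra).
      assert (0 < bt / (bt - 1)) by (apply Rdiv_lt_0_compat; lra). unfold Rdiv. nra.
  - destruct (Rle_dec a0 (U (S n))).
    + eapply Rle_trans; [apply (L1 (S n) U HS r)|apply L3].
    + simpl. unfold gt at 2. destruct Rle_dec; [lra|]. rewrite Rplus_0_r.
      apply IH. intros d d' h1 h2. apply HS; lia.
Qed.

Lemma sum_Gam_bound n U : Sp U n -> sum_f_R0 (fun d => Gam (U d)) n <= Ctot.
Proof.
  intros HS.
  assert (H := int_sum U n).
  assert (Hc := is_RInt_const (V := R_NormedModule) 0 1 Ctot).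
  assert (sum_f_R0 (fun d => Gam (U d)) n <= scal (1 - 0) Ctot).
  { apply (is_RInt_le _ _ 0 1 _ _ ltac:(lra) H Hc). intros s _.
    apply L2. intros d d' h1 h2. pose proof (HS d d' h1 h2). lra. }
  change (scal (1 - 0) Ctot) with ((1 - 0) * Ctot) in H0. lra.
Qed.

End RealPart.

Local Open Scope nat_scope.


Definition sumL (l : list nat) := fold_right Nat.add 0%nat l.
Definition maxL (l : list nat) := fold_right Nat.max 0%nat l.

Lemma maxL_le_sumL l : (maxL l <= sumL l)%nat.
Proof. induction l; simpl; unfold maxL, sumL in *; simpl; lia. Qed.

Lemma step_nat {A} (l : list A) (h e : A -> nat) :
  (sumL (map h l) + sumL (map e l) = sumL (map (fun y => h y + e y) l))%nat /\
  (maxL (map h l) <= maxL (map (fun y => h y + e y) l) <= maxL (map h l) + sumL (map e l))%nat.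
Proof.
  induction l as [|y l IH]; simpl; unfold sumL, maxL in *; simpl; [lia|]. lia.
Qed.

Lemma score_step {A} (l : list A) (h e : A -> nat) :
  (sumL (map e l) <= 1)%nat ->
  (sumL (map h l) - maxL (map h l) <= sumL (map (fun y => h y + e y) l) - maxL (map (fun y => h y + e y) l)
   <= sumL (map h l) - maxL (map h l) + 1)%nat.
Proof.
  intros He. destruct (step_nat l h e) as [E1 [E2 E3]].
  pose proof (maxL_le_sumL (map h l)). pose proof (maxL_le_sumL (map (fun y => h y + e y) l)). lia.
Qed.

Lemma score_mono_nat {A} (l : list A) (h1 h2 : A -> nat) :
  (forall y, In y l -> (h2 y <= h1 y)%nat) ->
  (sumL (map h2 l) - maxL (map h2 l) <= sumL (map h1 l) - maxL (map h1 l))%nat.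
Proof.
  intros H.
  assert (G : (maxL (map h2 l) <= maxL (map h1 l) /\ sumL (map h2 l) <= sumL (map h1 l) /\
     sumL (map h2 l) - maxL (map h2 l) <= sumL (map h1 l) - maxL (map h1 l))%nat).
  { induction l as [|y l IH]; simpl; unfold sumL, maxL in *; simpl; [lia|].
    assert (IH' := IH (fun z hz => H z (or_intror hz))).
    pose proof (maxL_le_sumL (map h1 l)). pose proof (maxL_le_sumL (map h2 l)).
    unfold sumL, maxL in *. pose proof (H y (or_introl eq_refl)). lia. }
  tauto.
Qed.

Lemma filter_length_mono {A} (f g : A -> bool) l :
  (forall x, f x = true -> g x = true) -> (length (filter f l) <= length (filter g l))%nat.
Proof.
  intros H; induction l as [|x l IH]; simpl; [lia|].
  destruct (f x) eqn:E1; [rewrite (H x E1); simpl; lia|]. destruct (g x); simpl; lia.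
Qed.

Section Comb.
Variable I : Type.
Variable eqI : forall a b : I, {a = b} + {a <> b}.
Variable enumI : list I.

Definition Pos := (option I * list I)%type.

Definition histP (P : list Pos) (w : node I) (x : option I) : nat :=
  length (filter (fun pr => (sym_eqb I eqI (fst pr) x && ctx_match I eqI w (snd pr))%bool) P).

Definition scoreP (P : list Pos) (w : node I) : nat :=
  (sumL (map (histP P w) (symbols I enumI)) - maxL (map (histP P w) (symbols I enumI)))%nat.

Definition allpos (D : dataset I) : list Pos := flat_map (positions I) D.

Lemma hist_eq D w x : hist I eqI D w x = histP (allpos D) w x.
Proof.
  induction D as [|s D IH]; [reflexivity|].
  unfold hist in *. simpl. rewrite IH. unfold histP, allpos. simpl. rewrite filter_app, length_app. reflexivity.
Qed.

Lemma score_eq D w : score I eqI enumI D w = scoreP (allpos D) w.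
Proof.
  unfold score, scoreP. rewrite (map_ext (hist I eqI D w) (histP (allpos D) w)) by apply hist_eq.
  reflexivity.
Qed.

Lemma histP_perm P P' w x : Permutation P P' -> histP P w x = histP P' w x.
Proof.
  intros HP. unfold histP. induction HP; simpl.
  - reflexivity.
  - destruct (_ && _)%bool; simpl; auto.
  - destruct (_ && _)%bool; destruct (_ && _)%bool; simpl; auto.
  - congruence.
Qed.

Lemma scoreP_perm P P' w : Permutation P P' -> scoreP P w = scoreP P' w.
Proof.
  intros HP. unfold scoreP. rewrite (map_ext (histP P w) (histP P' w)) by (intros; apply histP_perm; auto).
  reflexivity.
Qed.

Lemma pos_aux_length pre b : length (pos_aux I pre b) = length b.
Proof. revert pre; induction b; intros; simpl; auto. Qed.

Lemma positions_length s : length (positions I s) = Defs.seq_length I s.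
Proof.
  unfold positions, Defs.seq_length. rewrite length_app, pos_aux_length. destruct (term I s); reflexivity.
Qed.

Lemma suffixb_iff u p : suffixb I eqI u p = true <-> exists e, p = e ++ u.
Proof.
  unfold suffixb. split.
  - intros H. apply andb_prop in H as [H1 H2].
    destruct (list_eq_dec eqI u (skipn (length p - length u) p)) as [E|]; [|discriminate].
    exists (firstn (length p - length u) p). rewrite E at 2. symmetry. apply firstn_skipn.
  - intros [e ->]. rewrite length_app. replace (length e + length u - length u)%nat with (length e) by lia.
    rewrite skipn_app, skipn_all, Nat.sub_diag. simpl.
    destruct (list_eq_dec eqI u u); [|congruence]. apply andb_true_intro; split; [|reflexivity].
    apply Nat.leb_le. lia.
Qed.

Lemma sym_count x : NoDup enumI ->
  (sumL (map (fun y => if sym_eqb I eqI x y then 1 else 0) (symbols I enumI)) <= 1)%nat.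
Proof.
  intros ND. unfold symbols. simpl. unfold sumL in *. simpl.
  rewrite map_map.
  destruct x as [a|]; simpl.
  - induction enumI as [|b l IH]; simpl; [lia|]. inversion ND; subst.
    destruct (eqI a b) as [->|ne].
    + assert (fold_right Nat.add 0%nat (map (fun y => if if eqI b y then true else false then 1%nat else 0%nat) l) = 0%nat).
      { clear IH ND. induction l as [|c l IH']; simpl; [reflexivity|].
        destruct (eqI b c); [subst; exfalso; apply H1; left; auto|]. apply IH'. intros Hc. apply H1. right; auto.
        inversion H2; auto. }
      lia.
    + apply IH; auto.
  - clear ND. induction enumI as [|b l IH]; simpl in *; lia.
Qed.
Lemma histP_cons x0 p P w y :
  histP ((x0, p) :: P) w y = histP P w y + (if (sym_eqb I eqI x0 y && ctx_match I eqI w p)%bool then 1 else 0).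
Proof. unfold histP. simpl. destruct (_ && _)%bool; simpl; lia. Qed.

Lemma scoreP_step x0 p P w : NoDup enumI ->
  (ctx_match I eqI w p = true -> scoreP P w <= scoreP ((x0, p) :: P) w <= scoreP P w + 1) /\
  (ctx_match I eqI w p = false -> scoreP ((x0, p) :: P) w = scoreP P w).
Proof.
  intros ND. split.
  - intros Hc. unfold scoreP.
    rewrite (map_ext (histP ((x0, p) :: P) w) (fun y => histP P w y + (if sym_eqb I eqI x0 y then 1 else 0)))
      by (intros y; rewrite histP_cons, Hc, andb_true_r; reflexivity).
    apply (score_step _ (histP P w) (fun y => if sym_eqb I eqI x0 y then 1 else 0)).
    apply sym_count; auto.
  - intros Hc. unfold scoreP.
    rewrite (map_ext (histP ((x0, p) :: P) w) (histP P w))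
      by (intros y; rewrite histP_cons, Hc, andb_false_r; lia).
    reflexivity.
Qed.

Lemma ctx_nd w p : ndollar I w = false -> ctx_match I eqI w p = suffixb I eqI (nstr I w) p.
Proof. intros H; unfold ctx_match; rewrite H; reflexivity. Qed.

Lemma scoreP_mono P w1 w2 : ndollar I w1 = false -> ndollar I w2 = false ->
  (exists e, nstr I w2 = e ++ nstr I w1) -> scoreP P w2 <= scoreP P w1.
Proof.
  intros h1 h2 [e He]. unfold scoreP. apply score_mono_nat. intros y _.
  unfold histP. apply filter_length_mono. intros [x c]. simpl.
  rewrite (ctx_nd w1), (ctx_nd w2) by auto.
  intros H. apply andb_prop in H as [Ha Hb]. rewrite Ha. simpl.
  apply suffixb_iff in Hb as [e' ->]. apply suffixb_iff. exists (e' ++ e). rewrite He, app_assoc. reflexivity.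
Qed.

Lemma chain O : valid_tree I enumI O -> (forall a, In a enumI) ->
  forall l u, l <> [] -> In (mkNode (l ++ u) false) O -> In (mkNode u true) O.
Proof.
  intros [ND [Hr [Hpar Hch]]] Hall. induction l as [|y l IH]; intros u Hne Hin; [congruence|].
  simpl in Hin.
  assert (Hp : In (mkNode (l ++ u) false) O).
  { apply (Hpar _ _ Hin). unfold parent. simpl. reflexivity. }
  destruct l as [|y' l'].
  - simpl in Hp. destruct (Hch _ Hp eq_refl) as [Hc|Hc].
    + apply Hc. unfold children. apply in_or_app. right. simpl. left. reflexivity.
    + exfalso. apply (Hc (mkNode (y :: u) false)); [|exact Hin].
      unfold children. apply in_or_app. left. simpl. apply in_map_iff. exists y. split; auto.
  - apply IH; [congruence|exact Hp].
Qed.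

End Comb.

Local Open Scope R_scope.
Open Scope R_scope.

Lemma prod_bound {T} (O : list T) (a b r : T -> R) :
  (forall w, In w O -> 0 <= a w /\ 0 <= b w /\ a w <= exp (r w) * b w) ->
  fold_right Rmult 1 (map a O) <= exp (fold_right Rplus 0 (map r O)) * fold_right Rmult 1 (map b O).
Proof.
  induction O as [|w O IH]; intros H; simpl.
  - rewrite exp_0; lra.
  - assert (IH' := IH (fun z hz => H z (or_intror hz))).
    destruct (H w (or_introl eq_refl)) as [h1 [h2 h3]].
    assert (0 <= fold_right Rmult 1 (map a O)).
    { clear IH IH'. induction O as [|z O IH2]; simpl; [lra|].
      apply Rmult_le_pos; [apply (H z); simpl; auto|]. apply IH2. intros q hq. apply H. simpl in hq |- *. tauto. }
    rewrite exp_plus.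
    replace (exp (r w) * exp (fold_right Rplus 0 (map r O)) * (b w * fold_right Rmult 1 (map b O)))
      with ((exp (r w) * b w) * (exp (fold_right Rplus 0 (map r O)) * fold_right Rmult 1 (map b O))) by ring.
    apply Rmult_le_compat; auto.
Qed.

Lemma sum_gap (F1 F2 : nat -> R) n d0 : (forall d, (d <= n)%nat -> F2 d <= F1 d) -> (d0 <= n)%nat ->
  sum_f_R0 F2 n + (F1 d0 - F2 d0) <= sum_f_R0 F1 n.
Proof.
  induction n as [|n IH]; intros H Hd.
  - assert (d0 = 0%nat) by lia; subst. simpl. lra.
  - simpl. destruct (Nat.eq_dec d0 (S n)) as [->|ne].
    + assert (sum_f_R0 F2 n <= sum_f_R0 F1 n) by (apply sum_Rle; intros; apply H; lia). lra.
    + assert (IH' := IH (fun d hd => H d ltac:(lia)) ltac:(lia)). pose proof (H (S n) (le_n _)). lra.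
Qed.

Lemma sum_inj {T} (dec : forall a b : T, {a = b} + {a <> b}) (O : list T) (r : T -> R) (N : nat -> T) (G : nat -> R) n :
  NoDup O -> (forall d, 0 <= G d) ->
  (forall w, In w O -> r w <= 0 \/ exists d, (d <= n)%nat /\ w = N d /\ r w <= G d) ->
  fold_right Rplus 0 (map r O) <= sum_f_R0 (fun d => if in_dec dec (N d) O then G d else 0) n.
Proof.
  intros ND HG. induction O as [|w O IH]; intros H; cbn [map fold_right].
  - apply cond_pos_sum. intros; destruct in_dec; [apply HG|lra].
  - inversion ND as [|? ? Hni ND']; subst.
    assert (IH' := IH ND' (fun z hz => H z (or_intror hz))).
    assert (Hle : forall d, (d <= n)%nat -> (if in_dec dec (N d) O then G d else 0) <= (if in_dec dec (N d) (w :: O) then G d else 0)).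
    { intros d _. destruct (in_dec dec (N d) O); destruct (in_dec dec (N d) (w :: O)); try lra.
      - exfalso; apply n0; right; auto.
      - apply HG. }
    destruct (H w (or_introl eq_refl)) as [h|[d0 [hd [-> hr]]]].
    + assert (sum_f_R0 (fun d => if in_dec dec (N d) O then G d else 0) n <=
              sum_f_R0 (fun d => if in_dec dec (N d) (w :: O) then G d else 0) n) by (apply sum_Rle; auto).
      lra.
    + pose proof (sum_gap (fun d => if in_dec dec (N d) (N d0 :: O) then G d else 0)
                          (fun d => if in_dec dec (N d) O then G d else 0) n d0 Hle hd) as Hg.
      cbv beta in Hg. destruct (in_dec dec (N d0) O); [contradiction|].
      destruct (in_dec dec (N d0) (N d0 :: O)); [|exfalso; apply n1; left; auto]. lra.
Qed.

Lemma sum_zero {T} (O : list T) (r : T -> R) : (forall w, In w O -> r w = 0) -> fold_right Rplus 0 (map r O) = 0.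
Proof. induction O as [|w O IH]; intros H; simpl; [reflexivity|]. rewrite H, IH; [ring| |]; auto. intros; apply H; right; auto. left; auto. Qed.

Lemma one_nonzero {T} (O : list T) (r : T -> R) c :
  NoDup O -> 0 <= c -> (forall w, In w O -> 0 <= r w <= c) ->
  (forall w1 w2, In w1 O -> In w2 O -> r w1 <> 0 -> r w2 <> 0 -> w1 = w2) ->
  fold_right Rplus 0 (map r O) <= c.
Proof.
  intros ND Hc. induction O as [|w O IH]; intros H1 H2; simpl; [lra|].
  inversion ND as [|? ? Hni ND']; subst.
  destruct (Req_dec (r w) 0) as [E|E].
  - rewrite E. rewrite Rplus_0_l. apply IH; auto. intros; apply H1; right; auto.
    intros; apply H2; auto; right; auto.
  - rewrite sum_zero. pose proof (H1 w (or_introl eq_refl)). lra.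
    intros w' hw'. destruct (Req_dec (r w') 0); auto. exfalso.
    assert (w = w') by (apply H2; auto; [left|right]; auto). subst. contradiction.
Qed.

Section Prob.
Variable I : Type.
Variable eqI : forall a b : I, {a = b} + {a <> b}.
Variable enumI : list I.
Hypothesis Hal : alphabet_ok I enumI.
Variables lam theta delta bt : R.
Hypothesis Hlam : 0 < lam.
Hypothesis Hdel : 0 < delta.
Hypothesis Hbt : 1 < bt.
Hypothesis Hdelta : delta = lam * ln bt.

Definition bvP P w := Rmax (theta - delta) (INR (scoreP I eqI enumI P w) - INR (depth I w) * delta).
Definition nfP P O w :=
  if ndollar I w then 1
  else if in_dec (node_eq_dec I eqI) (mkNode (nstr I w) true) O then ff lam theta (bvP P w)
       else 1 - ff lam theta (bvP P w).
Definition ProbP P O := fold_right Rmult 1 (map (nfP P O) O).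

Lemma nfP_nonneg P O w : 0 <= nfP P O w.
Proof.
  unfold nfP. pose proof (ff_bounds lam theta Hlam (bvP P w)).
  destruct (ndollar I w); [lra|]. destruct in_dec; lra.
Qed.

Lemma ProbP_nonneg P O : 0 <= ProbP P O.
Proof.
  unfold ProbP. induction O as [|w O' IH]; simpl; [lra|].
Abort.

Lemma ProbP_nonneg P O : 0 <= ProbP P O.
Proof.
  unfold ProbP. generalize O at 2. intros L. induction L as [|w L IH]; simpl; [lra|].
  apply Rmult_le_pos; [apply nfP_nonneg|exact IH].
Qed.

Definition rA p P w :=
  if ndollar I w then 0
  else if suffixb I eqI (nstr I w) p then Gam lam theta delta (INR (scoreP I eqI enumI P w) - INR (depth I w) * delta)
  else 0.

Lemma Rmax_mono a x y : x <= y -> Rmax a x <= Rmax a y.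
Proof. intros; unfold Rmax; repeat destruct Rle_dec; lra. Qed.

Lemma nodeA x0 p P O w : nfP ((x0, p) :: P) O w <= exp (rA p P w) * nfP P O w.
Proof.
  destruct Hal as [ND _].
  unfold nfP, rA. destruct (ndollar I w) eqn:Hd; [rewrite exp_0; lra|].
  destruct (scoreP_step I eqI enumI x0 p P w ND) as [Hm Hn].
  rewrite (ctx_nd I eqI w p Hd) in Hm, Hn.
  destruct (suffixb I eqI (nstr I w) p) eqn:Hs.
  - specialize (Hm eq_refl). destruct Hm as [Hm1 Hm2].
    apply le_INR in Hm1. apply le_INR in Hm2. rewrite plus_INR in Hm2. change (INR 1) with 1 in Hm2.
    unfold bvP.
    set (c1 := INR (scoreP I eqI enumI P w)) in *.
    set (c2 := INR (scoreP I eqI enumI ((x0, p) :: P) w)) in *.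
    set (u := c1 - INR (depth I w) * delta).
    assert (Hb1 : Rmax (theta - delta) u <= Rmax (theta - delta) (c2 - INR (depth I w) * delta)) by (apply Rmax_mono; unfold u; lra).
    assert (Hb2 : Rmax (theta - delta) (c2 - INR (depth I w) * delta) <= Rmax (theta - delta) (u + 1)) by (apply Rmax_mono; unfold u; lra).
    assert (HG : Gam lam theta delta u = HH lam theta (Rmax (theta - delta) (u + 1)) - HH lam theta (Rmax (theta - delta) u)) by reflexivity.
    pose proof (Gam_nonneg lam theta delta Hlam u) as Gp.
    fold u.
    destruct in_dec.
    + eapply Rle_trans; [apply (ff_ratio lam theta Hlam _ _ Hb1)|].
      apply Rmult_le_compat_r; [pose proof (ff_bounds lam theta Hlam (Rmax (theta - delta) u)); lra|].
      apply exp_mono. rewrite HG. pose proof (HH_mono lam theta Hlam _ _ Hb2). lra.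
    + pose proof (ff_mono lam theta Hlam _ _ Hb1).
      pose proof (ff_bounds lam theta Hlam (Rmax (theta - delta) u)).
      pose proof (exp_mono _ _ Gp). rewrite exp_0 in H1. nra.
  - unfold bvP. rewrite (Hn eq_refl). rewrite exp_0. lra.
Qed.

Definition rB p O w :=
  if ndollar I w then 0
  else if suffixb I eqI (nstr I w) p then
    (if in_dec (node_eq_dec I eqI) (mkNode (nstr I w) true) O then 0 else / lam)
  else 0.

Lemma nodeB x0 p P O w : nfP P O w <= exp (rB p O w) * nfP ((x0, p) :: P) O w.
Proof.
  destruct Hal as [ND _].
  unfold nfP, rB. destruct (ndollar I w) eqn:Hd; [rewrite exp_0; lra|].
  destruct (scoreP_step I eqI enumI x0 p P w ND) as [Hm Hn].
  rewrite (ctx_nd I eqI w p Hd) in Hm, Hn.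
  destruct (suffixb I eqI (nstr I w) p) eqn:Hs.
  - specialize (Hm eq_refl). destruct Hm as [Hm1 Hm2].
    apply le_INR in Hm1. apply le_INR in Hm2. rewrite plus_INR in Hm2. change (INR 1) with 1 in Hm2.
    unfold bvP.
    set (c1 := INR (scoreP I eqI enumI P w)) in *.
    set (c2 := INR (scoreP I eqI enumI ((x0, p) :: P) w)) in *.
    set (b1 := Rmax (theta - delta) (c1 - INR (depth I w) * delta)).
    set (b2 := Rmax (theta - delta) (c2 - INR (depth I w) * delta)).
    assert (Hb1 : b1 <= b2) by (apply Rmax_mono; lra).
    assert (Hb2 : b2 - b1 <= 1) by (unfold b1, b2, Rmax; repeat destruct Rle_dec; lra).
    destruct in_dec.
    + rewrite exp_0. pose proof (ff_mono lam theta Hlam _ _ Hb1). lra.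
    + eapply Rle_trans; [apply (ff_ratio2 lam theta Hlam _ _ Hb1)|].
      apply Rmult_le_compat_r; [pose proof (ff_bounds lam theta Hlam b2); lra|].
      apply exp_mono. unfold Rdiv. assert (0 < / lam) by (apply Rinv_0_lt_compat; lra). nra.
  - unfold bvP. rewrite (Hn eq_refl). rewrite exp_0. lra.
Qed.
Lemma ProbP_perm P P' O : Permutation P P' -> ProbP P O = ProbP P' O.
Proof.
  intros HP. unfold ProbP. f_equal. apply map_ext. intros w. unfold nfP, bvP.
  rewrite (scoreP_perm I eqI enumI P P' w HP). reflexivity.
Qed.

Lemma Ctot_pos : /lam <= Ctot lam bt.
Proof.
  unfold Ctot. assert (0 < / lam) by (apply Rinv_0_lt_compat; lra).
  assert (0 < bt / (bt - 1)) by (apply Rdiv_lt_0_compat; lra). unfold Rdiv. nra.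
Qed.

Lemma sumA p P O : NoDup O -> fold_right Rplus 0 (map (rA p P) O) <= Ctot lam bt.
Proof.
  intros NDO.
  set (n := length p).
  set (N := fun d => mkNode (skipn (length p - d) p) false : node I).
  set (U := fun d => INR (scoreP I eqI enumI P (N d)) - INR d * delta).
  eapply Rle_trans.
  - apply (sum_inj (node_eq_dec I eqI) O (rA p P) N (fun d => Gam lam theta delta (U d)) n NDO).
    + intros; apply Gam_nonneg; auto.
    + intros w Hw. unfold rA. destruct (ndollar I w) eqn:Hd; [left; lra|].
      destruct (suffixb I eqI (nstr I w) p) eqn:Hs; [|left; lra].
      right. apply suffixb_iff in Hs as [e He].
      exists (length (nstr I w)). split; [unfold n; rewrite He, length_app; lia|].
      assert (Ew : w = N (length (nstr I w))).
      { unfold N. destruct w as [u b]. simpl in *. subst b. f_equal. rewrite He, length_app.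
        replace (length e + length u - length u)%nat with (length e) by lia.
        rewrite skipn_app, skipn_all, Nat.sub_diag. reflexivity. }
      split; [exact Ew|]. unfold U. rewrite <- Ew. unfold depth. rewrite Hd, Nat.add_0_r. lra.
  - eapply Rle_trans.
    + apply sum_Rle. intros d _. destruct in_dec; [apply Rle_refl|apply Gam_nonneg; auto].
    + apply (sum_Gam_bound lam theta delta Hlam Hdel bt Hbt Hdelta n U).
      intros d d' h1 h2. unfold U.
      assert (Hm : (scoreP I eqI enumI P (N d') <= scoreP I eqI enumI P (N d))%nat).
      { apply scoreP_mono; try reflexivity. unfold N; simpl.
        set (k := (length p - d)%nat). set (k' := (length p - d')%nat).
        exists (firstn (k - k') (skipn k' p)).
        rewrite <- (firstn_skipn (k - k') (skipn k' p)) at 1. f_equal.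
        rewrite skipn_skipn. f_equal. unfold k, k'. unfold n in h2. lia. }
      apply le_INR in Hm. lra.
Qed.

Lemma stepA x0 p P O : NoDup O -> ProbP ((x0, p) :: P) O <= exp (Ctot lam bt) * ProbP P O.
Proof.
  intros NDO. unfold ProbP at 1.
  eapply Rle_trans.
  - apply (prod_bound O (nfP ((x0, p) :: P) O) (nfP P O) (rA p P)).
    intros w _. split; [apply nfP_nonneg|]. split; [apply nfP_nonneg|]. apply nodeA.
  - apply Rmult_le_compat_r; [apply ProbP_nonneg|]. apply exp_mono, sumA; auto.
Qed.

Lemma sumB p O : valid_tree I enumI O -> fold_right Rplus 0 (map (rB p O) O) <= / lam.
Proof.
  intros HV. destruct HV as [NDO HV'].
  assert (Hl : 0 < / lam) by (apply Rinv_0_lt_compat; lra).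
  apply one_nonzero; auto; [lra| |].
  - intros w _. unfold rB. destruct ndollar; [lra|]. destruct suffixb; [|lra]. destruct in_dec; lra.
  - intros w1 w2 H1 H2 N1 N2. unfold rB in N1, N2.
    destruct (ndollar I w1) eqn:D1; [lra|]. destruct (ndollar I w2) eqn:D2; [lra|].
    destruct (suffixb I eqI (nstr I w1) p) eqn:S1; [|lra]. destruct (suffixb I eqI (nstr I w2) p) eqn:S2; [|lra].
    destruct (in_dec (node_eq_dec I eqI) (mkNode (nstr I w1) true) O) as [|Q1]; [lra|].
    destruct (in_dec (node_eq_dec I eqI) (mkNode (nstr I w2) true) O) as [|Q2]; [lra|].
    apply suffixb_iff in S1 as [e1 E1]. apply suffixb_iff in S2 as [e2 E2].
    destruct w1 as [u1 b1], w2 as [u2 b2]. simpl in *. subst b1 b2.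
    rewrite E1 in E2. apply app_eq_app in E2 as [l [[_ Hl2]|[_ Hl1]]].
    + destruct l as [|y l]. { simpl in Hl2. subst. reflexivity. }
      exfalso. apply Q1. apply (chain I enumI O (conj NDO HV') (proj2 Hal) (y :: l) u1); [congruence|].
      rewrite <- Hl2. exact H2.
    + destruct l as [|y l]. { simpl in Hl1. subst. reflexivity. }
      exfalso. apply Q2. apply (chain I enumI O (conj NDO HV') (proj2 Hal) (y :: l) u2); [congruence|].
      rewrite <- Hl1. exact H1.
Qed.

Lemma stepB x0 p P O : valid_tree I enumI O -> ProbP P O <= exp (Ctot lam bt) * ProbP ((x0, p) :: P) O.
Proof.
  intros HV. unfold ProbP at 1.
  eapply Rle_trans.
  - apply (prod_bound O (nfP P O) (nfP ((x0, p) :: P) O) (rB p O)).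
    intros w _. split; [apply nfP_nonneg|]. split; [apply nfP_nonneg|]. apply nodeB.
  - apply Rmult_le_compat_r; [apply ProbP_nonneg|]. apply exp_mono.
    pose proof (sumB p O HV). pose proof Ctot_pos. lra.
Qed.

Lemma chainA Q P O : NoDup O -> ProbP (Q ++ P) O <= exp (INR (length Q) * Ctot lam bt) * ProbP P O.
Proof.
  intros NDO. induction Q as [|[x0 p] Q IH].
  - simpl. rewrite Rmult_0_l, exp_0. lra.
  - simpl (_ :: _ ++ _). eapply Rle_trans; [apply stepA; auto|].
    simpl length. rewrite S_INR.
    replace ((INR (length Q) + 1) * Ctot lam bt) with (Ctot lam bt + INR (length Q) * Ctot lam bt) by ring.
    rewrite exp_plus, Rmult_assoc. apply Rmult_le_compat_l; [left; apply exp_pos|exact IH].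
Qed.

Lemma chainB Q P O : valid_tree I enumI O -> ProbP P O <= exp (INR (length Q) * Ctot lam bt) * ProbP (Q ++ P) O.
Proof.
  intros HV. induction Q as [|[x0 p] Q IH].
  - simpl. rewrite Rmult_0_l, exp_0. lra.
  - simpl (_ :: _ ++ _). eapply Rle_trans; [exact IH|].
    simpl length. rewrite S_INR.
    replace ((INR (length Q) + 1) * Ctot lam bt) with (INR (length Q) * Ctot lam bt + Ctot lam bt) by ring.
    rewrite exp_plus, Rmult_assoc. apply Rmult_le_compat_l; [left; apply exp_pos|]. apply stepB; auto.
Qed.

Lemma pp_eq D O : privtree_prob I eqI enumI D lam theta delta O =
  if excluded_middle_informative (valid_tree I enumI O) then ProbP (allpos I D) O else 0.
Proof.
  unfold privtree_prob. destruct excluded_middle_informative; [|reflexivity].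
  unfold ProbP. f_equal. apply map_ext. intros w. unfold node_factor, nfP, p_split, bval, bvP, ff.
  rewrite score_eq. reflexivity.
Qed.

End Prob.

Open Scope R_scope.

Theorem theorem2 (I : Type) (eqI : forall a b : I, {a = b} + {a <> b})
  (enumI : list I) (ltop : nat) (eps theta lam delta : R) :
  alphabet_ok I enumI ->
  enumI <> nil ->
  (1 <= ltop)%nat ->
  0 < eps ->
  lam >= (2 * INR (beta I enumI) - 1) / (INR (beta I enumI) - 1) * (INR ltop / eps) ->
  delta = lam * ln (INR (beta I enumI)) ->
  forall D D' : dataset I,
    bounded_dataset I ltop D -> bounded_dataset I ltop D' ->
    neighboring I ltop D D' ->
    forall O : list (node I),
      privtree_prob I eqI enumI D lam theta delta O
        <= exp eps * privtree_prob I eqI enumI D' lam theta delta O.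
Proof.
  intros Hal Hne Hl Heps Hlam Hdelta D D' _ _ Hnb O.
  set (bt := INR (beta I enumI)) in *.
  assert (Hbt : 1 < bt).
  { unfold bt, beta. rewrite S_INR. destruct enumI as [|a0 l0]; [congruence|]. simpl length. rewrite S_INR.
    pose proof (pos_INR (length l0)). lra. }
  set (K := (2 * bt - 1) / (bt - 1)) in *.
  assert (HK : 0 < K) by (unfold K; apply Rdiv_lt_0_compat; lra).
  assert (Hlt : 1 <= INR ltop) by (change 1 with (INR 1); apply le_INR; auto).
  assert (Hlampos : 0 < lam).
  { assert (0 < INR ltop / eps) by (apply Rdiv_lt_0_compat; lra).
    assert (0 < K * (INR ltop / eps)) by (apply Rmult_lt_0_compat; lra). lra. }
  assert (Hdel : 0 < delta).
  { rewrite Hdelta. apply Rmult_lt_0_compat; auto. rewrite <- ln_1. apply ln_increasing; lra. }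
  assert (HC : Ctot lam bt = K / lam) by (unfold Ctot, K; field; lra).
  assert (Hbound : forall n, (n <= ltop)%nat -> exp (INR n * Ctot lam bt) <= exp eps).
  { intros n hn. apply exp_mono. rewrite HC. apply le_INR in hn.
    assert (E : K * INR ltop <= eps * lam).
    { assert (Hl2 : K * (INR ltop / eps) <= lam) by lra.
      apply (Rmult_le_compat_l eps) in Hl2; [|lra].
      replace (eps * (K * (INR ltop / eps))) with (K * INR ltop) in Hl2 by (field; lra). lra. }
    assert (0 <= INR n) by apply pos_INR.
    apply (Rmult_le_reg_r lam); [lra|]. replace (INR n * (K / lam) * lam) with (K * INR n) by (field; lra).
    nra. }
  rewrite !pp_eq.
  destruct excluded_middle_informative as [HV|HV]; [|lra].
  pose proof (ProbP_nonneg I eqI enumI lam theta delta Hlampos (allpos I D') O) as N1.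
  pose proof (ProbP_nonneg I eqI enumI lam theta delta Hlampos (allpos I D) O) as N2.
  destruct Hnb as [[s [Hs HP]]|[s [Hs HP]]].
  - assert (E : ProbP I eqI enumI lam theta delta (allpos I D') O =
                ProbP I eqI enumI lam theta delta (positions I s ++ allpos I D) O).
    { apply ProbP_perm. unfold allpos. apply (Permutation_flat_map (positions I)) in HP. exact HP. }
    rewrite E in *.
    eapply Rle_trans; [apply (chainB I eqI enumI Hal lam theta delta bt Hlampos Hdel Hbt Hdelta (positions I s)); auto|].
    apply Rmult_le_compat_r; auto. apply Hbound. pose proof (positions_length I s) as PL. change (@length (option I * list I) (positions I s) <= ltop)%nat. lia.
  - assert (E : ProbP I eqI enumI lam theta delta (allpos I D) O =
                ProbP I eqI enumI lam theta delta (positions I s ++ allpos I D') O).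
    { apply ProbP_perm. unfold allpos. apply (Permutation_flat_map (positions I)) in HP. exact HP. }
    rewrite E.
    eapply Rle_trans; [apply (chainA I eqI enumI Hal lam theta delta bt Hlampos Hdel Hbt Hdelta (positions I s)); destruct HV; auto|].
    apply Rmult_le_compat_r; auto. apply Hbound. pose proof (positions_length I s) as PL. change (@length (option I * list I) (positions I s) <= ltop)%nat. lia.
Qed.
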